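(* Let $w$ be a nonempty string. For any two strings $u, v \in \mathit{LFCand}(w)$ with $|u| < |v|$, $u$ is a prefix of $v$.
   Context: Let $\Sigma$ be a finite ordered alphabet, $\Sigma^+$ the set of nonempty strings over $\Sigma$. For nonempty strings $x,y$, write $x \prec y$ if either $x$ is a proper prefix of $y$, or at the first position $k$ where $x$ and $y$ differ we have $x[k] \prec y[k]$. For a set $S$ of nonempty strings, $\min_\prec S$ is its lexicographically smallest element. $\mathit{Suffix}(w)$ denotes the set of (nonempty) suffixes of $w$. For a nonempty string $w$, $\mathit{LFCand}(w) = \{x \in \mathit{Suffix}(w) \mid \exists y \in \Sigma^+ \text{ such that } xy = \min_\prec \mathit{Suffix}(wy)\}$. *)

(* Defs.v *)
From mathcomp Require Import all_boot all_order.
Set Implicit Arguments. Unset Strict Implicit. Unset Printing Implicit Defensive.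
Import Order.TTheory.
Local Open Scope order_scope.

Section Lex.
Context {d : Order.disp_t} {T : finOrderType d}.

Definition lexlt (x y : seq T) : Prop :=
  (prefix x y /\ (size x < size y)%N) \/
  exists k : nat, exists a : T,
    [/\ (k < size x)%N, (k < size y)%N,
        take k x = take k y & (nth a x k < nth a y k)%O].

Definition is_suffix (x w : seq T) : Prop := x <> [::] /\ suffix x w.

Definition is_min_suffix (x s : seq T) : Prop :=
  is_suffix x s /\ forall z, is_suffix z s -> z = x \/ lexlt x z.

Definition LFCand (w : seq T) (x : seq T) : Prop :=
  is_suffix x w /\
  exists y : seq T, y <> [::] /\ is_min_suffix (x ++ y) (w ++ y).

End Lex.

(* Main.v *)
Require Import Defs.
From mathcomp Require Import all_boot all_order.
Import Order.TTheory.

Section H.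
Context {d : Order.disp_t} {T : finOrderType d}.

Lemma key (a b : seq T) j x0 : (j < size a)%N -> (j < size b)%N ->
  take j a = take j b -> nth x0 a j != nth x0 b j -> lexlt a b ->
  (nth x0 a j < nth x0 b j)%O.
Proof.
rewrite /lexlt; move=> ja jb tj ne [[pre _] | [k [c [ka kb tk lt]]]].
- move: pre; rewrite prefixE => /eqP E.
  have Eq : nth x0 a j = nth x0 b j by rewrite -[in LHS]E nth_take.
  by move: ne; rewrite Eq eqxx.
- case: (ltngtP k j) => H.
  + have : nth c a k = nth c b k by rewrite -(nth_take c H) tj nth_take.
    by move=> E; move: lt; rewrite E ltxx.
  + have : nth x0 a j = nth x0 b j by rewrite -(nth_take x0 H) tk nth_take.
    by move=> E; move: ne; rewrite E eqxx.
  + subst k. by rewrite (set_nth_default c x0 ja) (set_nth_default c x0 jb).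
Qed.

Lemma suff_cat (x w y : seq T) : is_suffix x w -> is_suffix (x ++ y) (w ++ y).
Proof.
move=> [nx /suffixP [s ->]]; split; first by case: x nx.
by apply/suffixP; exists s; rewrite catA.
Qed.

Lemma lex_size (a b : seq T) j x0 : (j < size a)%N -> (j < size b)%N ->
  take j a = take j b -> nth x0 a j != nth x0 b j ->
  forall y, [/\ (j < size (a ++ y))%N, (j < size (b ++ y))%N,
    take j (a ++ y) = take j (b ++ y) & nth x0 (a ++ y) j != nth x0 (b ++ y) j].
Proof.
move=> ja jb tj ne y.
have ja' : (j <= size a)%N by apply: ltnW.
have jb' : (j <= size b)%N by apply: ltnW.
rewrite !size_cat !nth_cat ja jb (takel_cat _ ja') (takel_cat _ jb').
split => //.
- exact: (leq_trans ja (leq_addr _ _)).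
- exact: (leq_trans jb (leq_addr _ _)).
Qed.

End H.

Theorem lemma4 (d : Order.disp_t) (T : finOrderType d) (w u v : seq T) :
  w <> [::] -> LFCand w u -> LFCand w v -> (size u < size v)%N ->
  prefix u v.
Proof.
move=> _ [su [y' [_ [_ minu]]]] [sv [y [_ [_ minv]]]] uv.
case: u su minu uv => [|x0 u'] su minu uv; first by case: su.
set u := x0 :: u' in su minu uv *.
rewrite prefixE.
case: (boolP (take (size u) v == u)) => // Hn.
have juv : forall j, (j < size u)%N -> (j < size v)%N.
  by move=> j jl; apply: ltn_trans uv.
case: (boolP (has (fun i => nth x0 u i != nth x0 v i) (iota 0 (size u)))); last first.
  move=> /hasPn H; exfalso; move/eqP: Hn; apply.
  have uv' : (size u <= size v)%N by apply: ltnW.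
  apply: (eq_from_nth (x0:=x0)); first by rewrite size_takel.
  move=> i; rewrite size_takel // => iu.
  rewrite nth_take //.
  have : i \in iota 0 (size u) by rewrite mem_iota.
  by move/H => /negPn /eqP ->.
move=> /hasP [i0 Hi0 Ne0].
have ex : exists j, (j < size u)%N && (nth x0 u j != nth x0 v j).
  exists i0; apply/andP; split => //.
  by move: Hi0; rewrite mem_iota.
case: (ex_minnP ex) => j /andP [ju nej] jmin.
have tj : take j u = take j v.
  apply: (eq_from_nth (x0:=x0)).
    by rewrite !size_takel // ltnW // juv.
  move=> i; rewrite size_takel; last exact: ltnW.
  move=> ij.
  rewrite !nth_take //; apply/eqP; apply/negP => /negP C.
  have := jmin i; rewrite C (ltn_trans ij ju) => /(_ isT).
  by rewrite leqNgt ij.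
have jv := juv j ju.
have nej' : nth x0 v j != nth x0 u j by rewrite eq_sym.
have L1 : (nth x0 v j < nth x0 u j)%O.
  have [E | Hl] := minv (u ++ y) (suff_cat _ _ y su).
    have := congr1 size E; rewrite !size_cat => /addIn E'.
    by move: uv; rewrite E' ltnn.
  have [a1 a2 a3 a4] := lex_size _ _ _ _ jv ju (esym tj) nej' y.
  have := key _ _ _ _ a1 a2 a3 a4 Hl.
  by rewrite !nth_cat jv ju.
have L2 : (nth x0 u j < nth x0 v j)%O.
  have [E | Hl] := minu (v ++ y') (suff_cat _ _ y' sv).
    have := congr1 size E; rewrite !size_cat => /addIn E'.
    by move: uv; rewrite E' ltnn.
  have [a1 a2 a3 a4] := lex_size _ _ _ _ ju jv tj nej y'.
  have := key _ _ _ _ a1 a2 a3 a4 Hl.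
  by rewrite !nth_cat jv ju.
by move: L1; rewrite ltNge (ltW L2).
Qed.
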